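(* Let $\Phi\in\mathcal{C}^2(\mathbb{R}^d)$, let $x_0,x_1\in\mathbb{R}^d$ and $R:=\max\{|x_0|,|x_1|\}>0$. Let $C:=\sup_{|x|\le 9R}|D^2\Phi(x)|$ and $C_{\rho}:=\max_{|x|\le\rho}|\nabla\Phi(x)|$. Let $t_1>0$ satisfy \[Ct_1^2e^{Ct_1^2}\le\tfrac14,\qquad t_1\le\frac{\sqrt R}{\sqrt{2C_{2R}}},\qquad t_1\le\frac{2\sqrt R}{\sqrt{C_{9R}}}\] (a bound with zero denominator being void). Then for every $0<t\le t_1$ there exists $v_0\in\mathbb{R}^d$ with $|v_0|\le4R$ such that $X_t(x_0,v_0/t)=x_1$.
   Context: $(X_t(x,v),V_t(x,v))$ denotes the solution at time $t$ of the ODE system $\dot x=v$, $\dot v=-\nabla\Phi(x)$ with initial data $(x,v)$; $D^2\Phi$ is the Hessian of $\Phi$ and $|\cdot|$ its operator norm. *)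

(* Defs.v *)
From Stdlib Require Import Reals.
From mathcomp Require Import ssreflect ssrbool eqtype ssrnat fintype bigop.
Set Implicit Arguments.
Unset Strict Implicit.
Open Scope R_scope.

Definition vec (d : nat) := 'I_d -> R.

Definition vnorm (d : nat) (x : vec d) : R :=
  sqrt (\big[Rplus/0]_(i < d) (x i * x i)).

Definition shift (d : nat) (x : vec d) (j : 'I_d) (h : R) : vec d :=
  fun i => if i == j then x i + h else x i.

Definition has_partial (d : nat) (f : vec d -> R) (x : vec d) (j : 'I_d) (l : R) : Prop :=
  derivable_pt_lim (fun h => f (shift x j h)) 0 l.

Definition continuous_Rd (d : nat) (f : vec d -> R) : Prop :=
  forall x eps, 0 < eps -> exists delta, 0 < delta /\
    forall y, vnorm (fun i => y i - x i) < delta -> Rabs (f y - f x) < eps.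

Definition C2_with (d : nat) (Phi : vec d -> R) (g : 'I_d -> vec d -> R)
  (H : 'I_d -> 'I_d -> vec d -> R) : Prop :=
  continuous_Rd Phi /\
  (forall x j, has_partial Phi x j (g j x)) /\
  (forall j, continuous_Rd (g j)) /\
  (forall x j k, has_partial (g j) x k (H j k x)) /\
  (forall j k, continuous_Rd (H j k)).

Definition mxapp (d : nat) (A : 'I_d -> 'I_d -> R) (u : vec d) : vec d :=
  fun j => \big[Rplus/0]_(k < d) (A j k * u k).

Definition is_opnorm (d : nat) (A : 'I_d -> 'I_d -> R) (c : R) : Prop :=
  is_lub (fun r => exists u : vec d, vnorm u <= 1 /\ r = vnorm (mxapp A u)) c.

Definition solves_on (d : nat) (g : 'I_d -> vec d -> R) (T : R)
  (xs vs : R -> vec d) (x0 w0 : vec d) : Prop :=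
  (forall i, xs 0 i = x0 i) /\ (forall i, vs 0 i = w0 i) /\
  forall s, 0 <= s <= T -> forall i,
    derivable_pt_lim (fun r => xs r i) s (vs s i) /\
    derivable_pt_lim (fun r => vs r i) s (- g i (xs s)).

(* Main.v *)
Require Import Defs.
From HB Require Import structures.
From Coquelicot Require Import Coquelicot.
From Stdlib Require Import Reals Lra Psatz FunctionalExtensionality.
From mathcomp Require Import ssreflect ssrfun ssrbool eqtype ssrnat fintype bigop.
Open Scope R_scope.


Lemma Rplus_assoc' : associative Rplus.
Proof. move=> x y z; ring. Qed.
Lemma Rplus_comm' : commutative Rplus.
Proof. move=> x y; ring. Qed.
Lemma Rplus_0_l' : left_id 0 Rplus.
Proof. move=> x; ring. Qed.
HB.instance Definition _ := Monoid.isComLaw.Build R 0 Rplus Rplus_assoc' Rplus_comm' Rplus_0_l'.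

Definition Sum n (F : 'I_n -> R) : R := \big[Rplus/0]_(i < n) F i.


Lemma sumS n (F : 'I_n.+1 -> R) :
  Sum n.+1 F = Sum n (fun i => F (widen_ord (leqnSn n) i)) + F ord_max.
Proof. rewrite /Sum big_ord_recr //. Qed.
Lemma sum0 (F : 'I_0 -> R) : Sum 0 F = 0.
Proof. rewrite /Sum big_ord0 //. Qed.

Lemma sum_plus n (F G : 'I_n -> R) : Sum n (fun i => F i + G i) = Sum n F + Sum n G.
Proof. elim: n F G => [|n IH] F G; first by rewrite !sum0; ring.
rewrite !sumS /= IH; ring. Qed.

Lemma sum_scal n (c : R) (F : 'I_n -> R) : Sum n (fun i => c * F i) = c * Sum n F.
Proof. elim: n F => [|n IH] F; first by rewrite !sum0; ring.
rewrite !sumS /= IH; ring. Qed.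

Lemma sum_opp n (F : 'I_n -> R) : Sum n (fun i => - F i) = - Sum n F.
Proof. elim: n F => [|n IH] F; first by rewrite !sum0; ring.
rewrite !sumS /= IH; ring. Qed.

Lemma sum_le n (F G : 'I_n -> R) : (forall i, F i <= G i) -> Sum n F <= Sum n G.
Proof. elim: n F G => [|n IH] F G H; first by rewrite !sum0; lra.
rewrite !sumS /=. apply Rplus_le_compat; auto. Qed.

Lemma sum_ge0 n (F : 'I_n -> R) : (forall i, 0 <= F i) -> 0 <= Sum n F.
Proof. move=> H. have := sum_le _ (fun _ => 0) F H.
have -> : Sum n (fun _ : 'I_n => 0) = 0.
  elim: n {F H} => [|n IH]; by rewrite ?sum0 // sumS /= IH; ring.
done. Qed.

Lemma sum_const n (c : R) : Sum n (fun _ : 'I_n => c) = INR n * c.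
Proof. elim: n => [|n IH]; first by rewrite sum0 /=; ring.
rewrite sumS IH S_INR; ring. Qed.

Lemma sum_abs n (F : 'I_n -> R) : Rabs (Sum n F) <= Sum n (fun i => Rabs (F i)).
Proof. elim: n F => [|n IH] F; first by rewrite !sum0 Rabs_R0; lra.
rewrite !sumS /=. eapply Rle_trans; first apply Rabs_triang.
apply Rplus_le_compat_r; apply IH. Qed.

Lemma sum_ext n (F G : 'I_n -> R) : (forall i, F i = G i) -> Sum n F = Sum n G.
Proof. move=> H; rewrite /Sum; apply eq_bigr => i _; apply H. Qed.

Lemma term_le n (F : 'I_n -> R) k : (forall i, 0 <= F i) -> F k <= Sum n F.
Proof. elim: n F k => [|n IH] F k H; first by case: k.
rewrite sumS /=.
case: k => m hm. case: (ltnP m n) => hmn.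
- have := IH (fun i => F (widen_ord (leqnSn n) i)) (Ordinal hmn) (fun i => H _).
  have -> : widen_ord (leqnSn n) (Ordinal hmn) = Ordinal hm by apply val_inj.
  have := H ord_max. lra.
- have e : Ordinal hm = ord_max.
    apply val_inj => /=. apply/eqP. rewrite eqn_leq hmn andbT. by rewrite -ltnS.
  rewrite e. have := sum_ge0 _ (fun i => F (widen_ord (leqnSn n) i)) (fun i => H _). lra.
Qed.

Lemma telescope (a : nat -> R) n : Sum n (fun i : 'I_n => a (S i) - a i) = a n - a O.
Proof. elim: n => [|n IH]; first by rewrite sum0; ring.
rewrite sumS /= IH; ring. Qed.

Definition dot {d} (u v : vec d) := Sum d (fun i => u i * v i).

Lemma sq_ge0 {d} (u : vec d) : 0 <= dot u u.
Proof. apply sum_ge0 => i; nra. Qed.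

Lemma vnorm_ge0 {d} (u : vec d) : 0 <= vnorm u.
Proof. apply sqrt_pos. Qed.

Lemma vnorm_sq {d} (u : vec d) : vnorm u * vnorm u = dot u u.
Proof. rewrite /vnorm sqrt_sqrt //; apply sq_ge0. Qed.

Lemma comp_le {d} (u : vec d) k : Rabs (u k) <= vnorm u.
Proof. rewrite /vnorm. rewrite -sqrt_Rsqr_abs. apply sqrt_le_1_alt.
rewrite /Rsqr. apply (term_le _ (fun i => u i * u i)) => i; nra. Qed.

Lemma vnorm0_comp {d} (u : vec d) k : vnorm u = 0 -> u k = 0.
Proof. move=> h. have := comp_le u k. rewrite h. move=> h2.
have := Rabs_pos (u k). move=> h3. have [h4|h4] := Rle_lt_dec (u k) 0; [rewrite Rabs_left1 in h2 h3 |- * |rewrite Rabs_pos_eq in h2 h3 |- *]; lra. Qed.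

Lemma dot_comm {d} (u v : vec d) : dot u v = dot v u.
Proof. apply sum_ext => i; ring. Qed.

Lemma CS {d} (u v : vec d) : dot u v <= vnorm u * vnorm v.
Proof.
set a := vnorm u. set b := vnorm v.
have ha : 0 <= a by apply vnorm_ge0. have hb : 0 <= b by apply vnorm_ge0.
have key : 0 <= dot (fun i => b * u i - a * v i) (fun i => b * u i - a * v i).
  apply sq_ge0.
have e : dot (fun i => b * u i - a * v i) (fun i => b * u i - a * v i) =
  b*b * dot u u + a*a * dot v v - 2 * (a*b) * dot u v.
  rewrite /dot /Rminus -!sum_scal -sum_opp -!sum_plus. apply sum_ext => i. ring.
rewrite e -(vnorm_sq u) -(vnorm_sq v) -/a -/b in key.
case: (Req_dec (a*b) 0) => hab.
- case: (Req_dec a 0) => ha0.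
  + have -> : dot u v = 0.
      rewrite /dot. rewrite (sum_ext _ _ (fun _ => 0)); last first.
        by move=> i; rewrite (vnorm0_comp _ i ha0); ring.
      rewrite sum_const; ring.
    nra.
  + have hb0 : b = 0 by nra.
    have -> : dot u v = 0.
      rewrite /dot. rewrite (sum_ext _ _ (fun _ => 0)); last first.
        by move=> i; rewrite (vnorm0_comp _ i hb0); ring.
      rewrite sum_const; ring.
    nra.
- have hp : 0 < a * b by nra. nra.
Qed.

Lemma vnorm_le_sq {d} (u : vec d) B : 0 <= B -> dot u u <= B * B -> vnorm u <= B.
Proof. move=> hB h. rewrite /vnorm. rewrite -(sqrt_square B) //.
apply sqrt_le_1_alt. done. Qed.

Lemma vnorm_triang {d} (u v : vec d) :
  vnorm (fun i => u i + v i) <= vnorm u + vnorm v.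
Proof. apply vnorm_le_sq. have := vnorm_ge0 u; have := vnorm_ge0 v; lra.
have e : dot (fun i => u i + v i) (fun i => u i + v i) = dot u u + 2 * dot u v + dot v v.
  rewrite /dot -!sum_scal -!sum_plus. apply sum_ext => i; ring.
rewrite e -(vnorm_sq u) -(vnorm_sq v). have := CS u v. nra. Qed.

Lemma vnormE {d} (u : vec d) : vnorm u = sqrt (dot u u).
Proof. by []. Qed.

Lemma vnorm_ext {d} (u v : vec d) : (forall i, u i = v i) -> vnorm u = vnorm v.
Proof. move=> h. have -> : u = v by apply functional_extensionality. done. Qed.

Lemma vnorm_scal {d} (c : R) (u : vec d) : vnorm (fun i => c * u i) = Rabs c * vnorm u.
Proof. rewrite !vnormE.
have -> : dot (fun i => c * u i) (fun i => c * u i) = (c*c) * dot u u.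
  rewrite /dot -sum_scal. apply sum_ext => i; ring.
rewrite sqrt_mult; [| nra | apply sq_ge0]. rewrite -sqrt_Rsqr_abs //. Qed.

Lemma abs_sq (x : R) : Rabs x * Rabs x = x * x.
Proof. rewrite -Rabs_mult Rabs_pos_eq //; nra. Qed.

Lemma vnorm_le_comp {d} (u v : vec d) : (forall i, Rabs (u i) <= Rabs (v i)) -> vnorm u <= vnorm v.
Proof. move=> h. rewrite !vnormE. apply sqrt_le_1_alt. apply sum_le => i.
have := h i. have := Rabs_pos (u i). rewrite -(abs_sq (u i)) -(abs_sq (v i)). nra. Qed.

Lemma sum_sq_le n (F : 'I_n -> R) : Sum n (fun i => F i * F i) <= Sum n (fun i => Rabs (F i)) * Sum n (fun i => Rabs (F i)).
Proof. elim: n F => [|n IH] F; first by rewrite !sum0; lra.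
rewrite !sumS. have := IH (fun i => F (widen_ord (leqnSn n) i)).
have := sum_ge0 _ (fun i => Rabs (F (widen_ord (leqnSn n) i))) (fun i => Rabs_pos _).
have := Rabs_pos (F ord_max). have := abs_sq (F ord_max). nra. Qed.

Lemma vnorm_le_sumabs {d} (u : vec d) : vnorm u <= Sum d (fun i => Rabs (u i)).
Proof. apply vnorm_le_sq. apply sum_ge0 => i; apply Rabs_pos. apply sum_sq_le. Qed.

Lemma vnorm_zero d : vnorm (fun _ : 'I_d => 0) = 0.
Proof. rewrite vnormE /dot. rewrite (sum_ext _ _ (fun _ => 0)); last by move=> i; ring.
rewrite sum_const Rmult_0_r sqrt_0 //. Qed.

Lemma vnorm_sub_sym {d} (u v : vec d) : vnorm (fun i => u i - v i) = vnorm (fun i => v i - u i).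
Proof. rewrite (vnorm_ext (fun i => u i - v i) (fun i => (-1) * (v i - u i))); last by move=> i; ring.
rewrite vnorm_scal Rabs_Ropp Rabs_R1; ring. Qed.

Lemma vnorm_triang3 {d} (u v w : vec d) :
  vnorm (fun i => u i - w i) <= vnorm (fun i => u i - v i) + vnorm (fun i => v i - w i).
Proof. rewrite (vnorm_ext (fun i => u i - w i) (fun i => (u i - v i) + (v i - w i))); last by move=> i; ring.
apply vnorm_triang. Qed.


Lemma ord_split n (k : 'I_n.+1) :
  (exists k' : 'I_n, k = widen_ord (leqnSn n) k') \/ k = ord_max.
Proof. case: k => m hm. case: (ltnP m n) => hmn.
- left. exists (Ordinal hmn). by apply val_inj.
- right. apply val_inj => /=. apply/eqP. rewrite eqn_leq hmn andbT. by rewrite -ltnS.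
Qed.

Lemma finite_delta n (P : 'I_n -> R -> Prop) :
  (forall k a b, 0 < b <= a -> P k a -> P k b) ->
  (forall k, exists a, 0 < a /\ P k a) -> exists a, 0 < a /\ forall k, P k a.
Proof.
elim: n P => [|n IH] P Hm He.
- exists 1; split; [lra|by case].
- have [a1 [ha1 H1]] := IH (fun k => P (widen_ord (leqnSn n) k))
     (fun k => Hm _) (fun k => He _).
  have [a2 [ha2 H2]] := He ord_max.
  exists (Rmin a1 a2); split; first by apply Rmin_glb_lt.
  move=> k. have [[k' Ek]|Ek] := ord_split _ k; rewrite Ek.
  + apply (Hm (widen_ord (leqnSn n) k') a1 (Rmin a1 a2)); last by apply H1. split; [by apply Rmin_glb_lt|apply Rmin_l].
  + apply (Hm ord_max a2 (Rmin a1 a2)); last by apply H2. split; [by apply Rmin_glb_lt|apply Rmin_r].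
Qed.

Lemma shift_shift d (y : vec d) k a b : shift (shift y k a) k b = shift y k (a + b).
Proof. apply functional_extensionality => i. rewrite /shift. case: (i == k); ring. Qed.

Lemma shift0 d (y : vec d) k : shift y k 0 = y.
Proof. apply functional_extensionality => i. rewrite /shift. case: (i == k); ring. Qed.

Lemma dpl_shift (phi : R -> R) s l :
  derivable_pt_lim (fun h => phi (s + h)) 0 l -> derivable_pt_lim phi s l.
Proof. move=> H eps he. have [del Hd] := H eps he. exists del => h hh hl.
have := Hd h hh hl. by rewrite Rplus_0_l Rplus_0_r. Qed.

Section Chain.
Variable d : nat.
Variable f : vec d -> R.
Variable Df : 'I_d -> vec d -> R.
Hypothesis hp : forall x k, has_partial f x k (Df k x).
Hypothesis hc : forall k, continuous_Rd (Df k).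

Lemma partial_at y k s : derivable_pt_lim (fun r => f (shift y k r)) s (Df k (shift y k s)).
Proof. apply dpl_shift. have := hp (shift y k s) k. rewrite /has_partial.
have -> : (fun h => f (shift (shift y k s) k h)) = (fun h => f (shift y k (s + h))).
  apply functional_extensionality => h. by rewrite shift_shift.
done. Qed.

Definition zp (q h : vec d) (m : nat) (e : R) : vec d :=
  fun i => q i + (if (i < m)%N then e * h i else 0).

Lemma zpS q h (k : 'I_d) e : zp q h k.+1 e = shift (zp q h k e) k (e * h k).
Proof. apply functional_extensionality => i. rewrite /zp /shift.
case: eqP => [->|ne]. rewrite ltnn ltnSn. ring.
have : (i : nat) <> k by move=> E; apply ne; apply val_inj.
move=> ne'. rewrite ltnS leq_eqVlt. have -> : ((i : nat) == k) = false by apply/eqP.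
done. Qed.

Lemma term_bound q h (k : 'I_d) e eta del :
  (forall y, vnorm (fun i => y i - q i) < del -> Rabs (Df k y - Df k q) < eta) ->
  Rabs e * vnorm h < del ->
  Rabs (f (zp q h k.+1 e) - f (zp q h k e) - e * (Df k q * h k)) <= Rabs e * (eta * Rabs (h k)).
Proof.
move=> Hc Hn. rewrite zpS. set y := zp q h k e.
have Hmvt := MVT_gen (fun r => f (shift y k r)) 0 (e * h k) (fun r => Df k (shift y k r)).
case: Hmvt => [r _|r _|c [hc1 hc2]].
- apply is_derive_Reals. apply partial_at.
- apply derivable_continuous_pt. exists (Df k (shift y k r)). apply partial_at.
- move: hc2. rewrite shift0 => ->.
  have hcb : Rabs c <= Rabs (e * h k).
    move: hc1. rewrite /Rmin /Rmax. case: Rle_dec => _ hc1;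
    rewrite Rabs_mult; have := Rabs_mult e (h k); split_Rabs; nra.
  have Hxi : vnorm (fun i => shift y k c i - q i) < del.
    eapply Rle_lt_trans; last exact Hn. rewrite -vnorm_scal.
    apply vnorm_le_comp => i. rewrite /shift /y /zp Rabs_mult.
    case: eqP => [->|ne]. rewrite ltnn. rewrite -Rabs_mult.
      have -> : q k + 0 + c - q k = c by ring. done.
    case: (i < k)%N.
      have -> : q i + e * h i - q i = e * h i by ring. rewrite Rabs_mult. lra.
      have -> : q i + 0 - q i = 0 by ring. rewrite Rabs_R0. apply Rmult_le_pos; apply Rabs_pos.
  have := Hc _ Hxi.
  have -> : Df k (shift y k c) * (e * h k - 0) - e * (Df k q * h k) =
            (e * h k) * (Df k (shift y k c) - Df k q) by ring.
  rewrite !Rabs_mult. move=> H1. rewrite (Rmult_comm eta) -Rmult_assoc. apply Rmult_le_compat_l. apply Rmult_le_pos; apply Rabs_pos. lra.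
Qed.

Lemma chain_rule (p h : vec d) t0 :
  derivable_pt_lim (fun t => f (fun i => p i + t * h i)) t0
    (Sum d (fun k => Df k (fun i => p i + t0 * h i) * h k)).
Proof.
set q := fun i => p i + t0 * h i.
move=> eps he.
set S := Sum d (fun k => Rabs (h k)).
have hS : 0 <= S by apply sum_ge0 => i; apply Rabs_pos.
set eta := eps / (S + 1).
have heta : 0 < eta by apply Rdiv_lt_0_compat; lra.
have [del [hdel Hdel]] := finite_delta d
  (fun k a => forall y, vnorm (fun i => y i - q i) < a -> Rabs (Df k y - Df k q) < eta)
  (fun k a b hab H y hy => H y ltac:(lra))
  (fun k => ltac:(have [a [ha Ha]] := hc k q eta heta; exists a; split; [exact ha|exact Ha])).
have hn := vnorm_ge0 h.
have hpos : 0 < del / (vnorm h + 1) by apply Rdiv_lt_0_compat; lra.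
exists (mkposreal _ hpos) => e he0 hel. simpl in hel.
have Hn : Rabs e * vnorm h < del.
  have : Rabs e * (vnorm h + 1) < del.
    apply (Rmult_lt_compat_r (vnorm h + 1)) in hel; last lra.
    move: hel. rewrite /Rdiv Rmult_assoc Rinv_l; lra.
  have := Rabs_pos e. nra.
have E1 : (fun i => p i + (t0 + e) * h i) = zp q h d e.
  apply functional_extensionality => i. rewrite /zp /q ltn_ord. ring.
have E0 : (fun i => p i + t0 * h i) = zp q h 0 e.
  apply functional_extensionality => i. rewrite /zp /q ltn0. ring.
rewrite E1 E0.
have Tel := telescope (fun m => f (zp q h m e)) d. simpl in Tel.
have Hsum : f (zp q h d e) - f (zp q h 0 e) - e * Sum d (fun k => Df k q * h k) =
   Sum d (fun k : 'I_d => f (zp q h k.+1 e) - f (zp q h k e) - e * (Df k q * h k)).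
  rewrite -Tel -sum_scal /Rminus -sum_opp -sum_plus. apply sum_ext => i. ring.
have Hb : Rabs (f (zp q h d e) - f (zp q h 0 e) - e * Sum d (fun k => Df k q * h k)) <= Rabs e * (eta * S).
  rewrite Hsum. eapply Rle_trans; first apply sum_abs.
  rewrite /S -sum_scal -sum_scal. apply sum_le => k. apply term_bound with del; auto.
have hea : 0 < Rabs e by apply Rabs_pos_lt.
have -> : (f (zp q h d e) - f (zp q h 0 e)) / e - Sum d (fun k => Df k q * h k) =
   (f (zp q h d e) - f (zp q h 0 e) - e * Sum d (fun k => Df k q * h k)) / e by field.
rewrite Rabs_div //.
apply (Rle_lt_trans _ (eta * S)).
  apply (Rmult_le_reg_r (Rabs e)) => //. rewrite /Rdiv Rmult_assoc Rinv_l; lra.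
rewrite /eta. have -> : eps / (S + 1) * S = eps * (S / (S+1)) by field; lra.
have : S / (S + 1) < 1. apply (Rmult_lt_reg_r (S+1)); first lra. rewrite /Rdiv Rmult_assoc Rinv_l; lra.
nra.
Qed.

End Chain.


Lemma sum_deriv n (F : 'I_n -> R -> R) (D : 'I_n -> R) x :
  (forall j, derivable_pt_lim (F j) x (D j)) ->
  derivable_pt_lim (fun t => Sum n (fun j => F j t)) x (Sum n D).
Proof. elim: n F D => [|n IH] F D H.
- rewrite sum0. have -> : (fun t => Sum 0 (fun j => F j t)) = fct_cte 0.
    apply functional_extensionality => t; by rewrite sum0.
  apply derivable_pt_lim_const.
- rewrite sumS. have -> : (fun t => Sum n.+1 (fun j => F j t)) =
     plus_fct (fun t => Sum n (fun j => F (widen_ord (leqnSn n) j) t)) (F ord_max).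
    apply functional_extensionality => t; by rewrite sumS.
  apply derivable_pt_lim_plus; last by apply H.
  apply (IH (fun j => F (widen_ord (leqnSn n) j))) => j; apply H.
Qed.

Lemma mxapp_zero {d} (A : 'I_d -> 'I_d -> R) (u : vec d) :
  (forall k, u k = 0) -> forall j, mxapp A u j = 0.
Proof. move=> h j. rewrite /mxapp. change (Sum d (fun k => A j k * u k) = 0).
rewrite (sum_ext _ _ (fun _ => 0)). by rewrite sum_const; ring. move=> k; rewrite h; ring. Qed.

Lemma opnorm_ge0 {d} (A : 'I_d -> 'I_d -> R) c : is_opnorm A c -> 0 <= c.
Proof. move=> [Hub _]. apply Hub. exists (fun _ => 0). rewrite vnorm_zero. split; first lra.
rewrite (vnorm_ext (mxapp A (fun _ => 0)) (fun _ => 0)). by rewrite vnorm_zero.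
by apply mxapp_zero. Qed.

Lemma opnorm_bound {d} (A : 'I_d -> 'I_d -> R) c u :
  is_opnorm A c -> vnorm (mxapp A u) <= c * vnorm u.
Proof. move=> Hc. have c0 := opnorm_ge0 _ _ Hc.
have hn := vnorm_ge0 u.
case: (Req_dec (vnorm u) 0) => hu.
- rewrite (vnorm_ext (mxapp A u) (fun _ => 0)). rewrite vnorm_zero; nra.
  apply mxapp_zero => k. by apply vnorm0_comp.
- have hp : 0 < vnorm u by lra.
  set w := fun k => / vnorm u * u k.
  have hw : vnorm w = 1. rewrite /w vnorm_scal Rabs_pos_eq. field; lra.
    left; by apply Rinv_0_lt_compat.
  have Hw : vnorm (mxapp A w) <= c. case: Hc => Hub _. apply Hub. exists w; split=>//; lra.
  have : vnorm (mxapp A w) = / vnorm u * vnorm (mxapp A u).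
    rewrite -(Rabs_pos_eq (/ vnorm u)); last by left; apply Rinv_0_lt_compat.
    rewrite -vnorm_scal. apply vnorm_ext => j. rewrite /mxapp /w.
    rewrite -[RHS]/(_ * Sum d _) -sum_scal. apply sum_ext => k. ring.
  move=> E. rewrite E in Hw.
  apply (Rmult_le_compat_l (vnorm u)) in Hw; last lra.
  move: Hw. rewrite -Rmult_assoc Rinv_r; lra.
Qed.

Lemma opnorm_exists {d} (A : 'I_d -> 'I_d -> R) : exists c, is_opnorm A c.
Proof.
set E := (fun r => exists u : vec d, vnorm u <= 1 /\ r = vnorm (mxapp A u)).
have Hb : bound E.
  exists (Sum d (fun j => Sum d (fun k => Rabs (A j k)))).
  move=> r [u [hu ->]]. eapply Rle_trans; first apply vnorm_le_sumabs.
  apply sum_le => j. rewrite /mxapp. eapply Rle_trans; first apply sum_abs.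
  apply sum_le => k. rewrite Rabs_mult. have := comp_le u k. have := Rabs_pos (A j k).
  have := Rabs_pos (u k). nra.
have He : exists r, E r.
  exists (vnorm (mxapp A (fun _ => 0))). exists (fun _ => 0). rewrite vnorm_zero. split=>//; lra.
have [m Hm] := completeness E Hb He. by exists m.
Qed.

Lemma ball_convex {d} (x y : vec d) c rho : 0 <= c <= 1 ->
  vnorm x <= rho -> vnorm y <= rho -> vnorm (fun i => y i + c * (x i - y i)) <= rho.
Proof. move=> hc hx hy.
rewrite (vnorm_ext _ (fun i => (1 - c) * y i + c * x i)); last by move=> i; ring.
eapply Rle_trans; first apply vnorm_triang.
rewrite !vnorm_scal !Rabs_pos_eq; nra. Qed.

Section Lip.
Variable d : nat.
Variable g : 'I_d -> vec d -> R.
Variable H : 'I_d -> 'I_d -> vec d -> R.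
Hypothesis hp : forall x j k, has_partial (g j) x k (H j k x).
Hypothesis hc : forall j k, continuous_Rd (H j k).
Variables rho C : R.
Hypothesis hCb : forall x, vnorm x <= rho -> forall c, is_opnorm (fun j k => H j k x) c -> c <= C.

Lemma lipschitz x y : vnorm x <= rho -> vnorm y <= rho ->
  vnorm (fun j => g j x - g j y) <= C * vnorm (fun i => x i - y i).
Proof.
move=> hx hy.
set hv : vec d := fun i => x i - y i.
set w : vec d := fun j => g j x - g j y.
set pt := fun t : R => (fun i => y i + t * hv i) : vec d.
set phi := fun t => Sum d (fun j => w j * g j (pt t)).
set dphi := fun t => Sum d (fun j => w j * Sum d (fun k => H j k (pt t) * hv k)).
have Hd : forall t, derivable_pt_lim phi t (dphi t).
  move=> t. apply sum_deriv => j.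
  apply (derivable_pt_lim_scal (fun t => g j (pt t))).
  apply (chain_rule d (g j) (H j) (fun x k => hp x j k) (hc j)).
have [c [hc1 hc2]] := MVT_gen phi 0 1 dphi
   (fun t _ => proj2 (is_derive_Reals _ _ _) (Hd t))
   (fun t _ => derivable_continuous_pt phi t (exist _ (dphi t) (Hd t))).
rewrite Rmin_left in hc1; last lra. rewrite Rmax_right in hc1; last lra.
have E1 : phi 1 - phi 0 = dot w w.
  rewrite /phi /dot /Rminus -sum_opp -sum_plus. apply sum_ext => j.
  have -> : pt 1 = x. apply functional_extensionality => i. rewrite /pt /hv; ring.
  have -> : pt 0 = y. apply functional_extensionality => i. rewrite /pt /hv; ring.
  rewrite /w; ring.
have Hin : vnorm (pt c) <= rho by apply ball_convex.
have [cA HA] := opnorm_exists (fun j k => H j k (pt c)).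
have hcA := hCb _ Hin _ HA.
have cA0 := opnorm_ge0 _ _ HA.
have E2 : dphi c = dot w (mxapp (fun j k => H j k (pt c)) hv) by [].
have Hb : dot w w <= vnorm w * (C * vnorm hv).
  rewrite -E1 hc2 Rminus_0_r Rmult_1_r E2.
  eapply Rle_trans; first apply CS.
  apply Rmult_le_compat_l; first apply vnorm_ge0.
  eapply Rle_trans; first apply (opnorm_bound _ _ hv HA).
  apply Rmult_le_compat_r; [apply vnorm_ge0|lra].
rewrite -vnorm_sq in Hb.
have := vnorm_ge0 w. have := vnorm_ge0 hv. move=> h1 h2.
case: (Req_dec (vnorm w) 0) => hw. rewrite /w in hw. rewrite hw. nra.
have : 0 < vnorm w by lra. move=> hpw.
apply (Rmult_le_reg_l (vnorm w)); first done. lra.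
Qed.
End Lip.


Lemma cont_eps (f : R -> R) x :
  (forall eps, 0 < eps -> exists del, 0 < del /\ forall y, Rabs (y - x) < del -> Rabs (f y - f x) < eps) ->
  continuity_pt f x.
Proof. move=> H eps he. have [del [hd Hd]] := H eps he. exists del; split; first lra.
move=> y [_ hy]. apply Hd. exact hy. Qed.



Lemma cont_eps_inv (f : R -> R) x : continuity_pt f x ->
  forall eps, 0 < eps -> exists del, 0 < del /\ forall y, Rabs (y - x) < del -> Rabs (f y - f x) < eps.
Proof. move=> H eps he. have [del [hd Hd]] := H eps he. exists del; split; first lra.
move=> y hy. case: (Req_dec y x) => [->|ne]. rewrite Rminus_eq_0 Rabs_R0; lra.
apply Hd. split=>//. split=>//. by apply nesym. Qed.

Lemma RInt_sum n (F : 'I_n -> R -> R) a b : (forall i, ex_RInt (F i) a b) ->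
  ex_RInt (fun r => Sum n (fun i => F i r)) a b /\
  RInt (fun r => Sum n (fun i => F i r)) a b = Sum n (fun i => RInt (F i) a b).
Proof. elim: n F => [|n IH] F H.
- have E : (fun r => Sum 0 (fun i => F i r)) = (fun _ => 0).
    apply functional_extensionality => r; by rewrite sum0.
  rewrite E sum0. split; first apply ex_RInt_const.
  rewrite RInt_const. rewrite /scal /= /mult /=. ring.
- have E : (fun r => Sum n.+1 (fun i => F i r)) =
    (fun r => Sum n (fun i => F (widen_ord (leqnSn n) i) r) + F ord_max r).
    apply functional_extensionality => r; by rewrite sumS.
  have [IH1 IH2] := IH (fun i => F (widen_ord (leqnSn n) i)) (fun i => H _).
  rewrite E sumS. split. exact (ex_RInt_plus (V:=R_NormedModule) _ _ a b IH1 (H ord_max)).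
  have := RInt_plus (V:=R_CompleteNormedModule) _ _ a b IH1 (H ord_max). rewrite /plus /=.
  move=> ->. rewrite IH2. done.
Qed.

Lemma RInt_sub (f g : R -> R) a b : ex_RInt f a b -> ex_RInt g a b ->
  RInt f a b - RInt g a b = RInt (fun r => f r - g r) a b.
Proof. move=> hf hg. have := RInt_minus f g a b hf hg. rewrite /minus /plus /opp /=. by move=> ->. Qed.

Lemma RInt_mulc (f : R -> R) a b c : ex_RInt f a b ->
  RInt (fun r => c * f r) a b = c * RInt f a b.
Proof. move=> hf. have := RInt_scal f a b c hf. rewrite /scal /= /mult /=. by []. Qed.

Lemma ex_RInt_mulc (f : R -> R) a b c : ex_RInt f a b -> ex_RInt (fun r => c * f r) a b.
Proof. move=> hf. exact: (ex_RInt_scal f a b c hf). Qed.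

Lemma VIB {d} (a b K M : R) (k : R -> R) (w : R -> vec d) : a <= b ->
  (forall j, ex_RInt (fun r => k r * w r j) a b) ->
  (forall r, a <= r <= b -> 0 <= k r <= K) ->
  (forall r, a <= r <= b -> vnorm (w r) <= M) -> 0 <= M ->
  vnorm (fun j => RInt (fun r => k r * w r j) a b) <= K * M * (b - a).
Proof.
move=> hab hex hk hw hM.
set I : vec d := fun j => RInt (fun r => k r * w r j) a b.
have hI := vnorm_ge0 I.
have [S1 S2] := RInt_sum d (fun j r => I j * (k r * w r j)) a b
   (fun j => ex_RInt_mulc _ _ _ _ (hex j)).
have E : dot I I = RInt (fun r => Sum d (fun j => I j * (k r * w r j))) a b.
  rewrite S2 /dot. apply sum_ext => j. rewrite RInt_mulc //.
have Hle : RInt (fun r => Sum d (fun j => I j * (k r * w r j))) a b <=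
           RInt (fun _ => K * M * vnorm I) a b.
  apply RInt_le => //. apply ex_RInt_const.
  move=> r hr. have hr' : a <= r <= b by lra.
  have -> : Sum d (fun j => I j * (k r * w r j)) = k r * dot I (w r).
    rewrite /dot -sum_scal. apply sum_ext => j; ring.
  have := CS I (w r). have := hk r hr'. have := hw r hr'. have := vnorm_ge0 (w r).
  move=> h1 h2 h3 h4.
  have h5 : k r * dot I (w r) <= k r * (vnorm I * vnorm (w r)) by apply Rmult_le_compat_l; lra.
  have h6 : vnorm I * vnorm (w r) <= vnorm I * M by apply Rmult_le_compat_l; lra.
  have h7 : 0 <= vnorm I * M by nra.
  have h8 : k r * (vnorm I * M) <= K * (vnorm I * M) by apply Rmult_le_compat_r; lra.
  nra.
rewrite RInt_const /scal /= /mult /= in Hle.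
rewrite -E -vnorm_sq in Hle.
case: (Req_dec (vnorm I) 0) => h0. rewrite /I in h0. rewrite h0.
  have : 0 <= K by (have := hk a ltac:(lra); lra). move=> hK. apply Rmult_le_pos; [apply Rmult_le_pos|]; lra.
have hp : 0 < vnorm I by lra.
apply (Rmult_le_reg_l (vnorm I)) => //. nra.
Qed.


Lemma cont_of_der f s l : derivable_pt_lim f s l -> continuity_pt f s.
Proof. move=> H. apply derivable_continuous_pt. by exists l. Qed.

Lemma cpt_cont f s : continuity_pt f s -> continuous f s.
Proof. move=> H. by apply continuity_pt_filterlim. Qed.

Lemma dpl_eq f s l l' : derivable_pt_lim f s l -> l = l' -> derivable_pt_lim f s l'.
Proof. by move=> H <-. Qed.

Lemma dplus u v s du dv : derivable_pt_lim u s du -> derivable_pt_lim v s dv ->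
  derivable_pt_lim (fun r => u r + v r) s (du + dv).
Proof. move=> H1 H2. exact (derivable_pt_lim_plus u v s du dv H1 H2). Qed.

Lemma dmult u v s du dv : derivable_pt_lim u s du -> derivable_pt_lim v s dv ->
  derivable_pt_lim (fun r => u r * v r) s (du * v s + u s * dv).
Proof. move=> H1 H2. exact (derivable_pt_lim_mult u v s du dv H1 H2). Qed.

Lemma dminus u v s du dv : derivable_pt_lim u s du -> derivable_pt_lim v s dv ->
  derivable_pt_lim (fun r => u r - v r) s (du - dv).
Proof. move=> H1 H2. exact (derivable_pt_lim_minus u v s du dv H1 H2). Qed.

Lemma dconst a s : derivable_pt_lim (fun _ => a) s 0.
Proof. exact (derivable_pt_lim_const a s). Qed.

Lemma dA (f : R -> R) a s : (forall u v, ex_RInt f u v) -> (forall r, continuous f r) ->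
  derivable_pt_lim (fun s => RInt f a s) s (f s).
Proof. move=> hex hc. apply is_derive_Reals.
apply (is_derive_RInt f (RInt f a) a s). apply filter_forall => b. exact (RInt_correct (V:=R_CompleteNormedModule) _ _ _ (hex _ _)).
auto. Qed.

Lemma dB (f : R -> R) b s : (forall u v, ex_RInt f u v) -> (forall r, continuous f r) ->
  derivable_pt_lim (fun s => RInt f s b) s (- f s).
Proof. move=> hex hc. apply is_derive_Reals.
apply (is_derive_RInt' f (fun s => RInt f s b) s b). apply filter_forall => a. exact (RInt_correct (V:=R_CompleteNormedModule) _ _ _ (hex _ _)).
auto. Qed.

Lemma lim_sum n (F : 'I_n -> nat -> R) (L : 'I_n -> R) :
  (forall i, is_lim_seq (F i) (L i)) -> is_lim_seq (fun m => Sum n (fun i => F i m)) (Sum n L).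
Proof. elim: n F L => [|n IH] F L H.
- rewrite sum0. have -> : (fun m => Sum 0 (fun i => F i m)) = (fun _ => 0).
    apply functional_extensionality => m; by rewrite sum0.
  apply is_lim_seq_const.
- rewrite sumS. have -> : (fun m => Sum n.+1 (fun i => F i m)) =
    (fun m => Sum n (fun i => F (widen_ord (leqnSn n) i) m) + F ord_max m).
    apply functional_extensionality => m; by rewrite sumS.
  apply is_lim_seq_plus'; last by apply H.
  apply (IH (fun i => F (widen_ord (leqnSn n) i))) => i; apply H.
Qed.

Lemma LIMV {d} (u : nat -> vec d) (l w : vec d) (N : nat) B :
  (forall j, is_lim_seq (fun m => u m j) (l j)) ->
  (forall m, (N <= m)%coq_nat -> vnorm (fun j => u m j - w j) <= B) ->
  vnorm (fun j => l j - w j) <= B.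
Proof. move=> hl hb.
have B0 : 0 <= B. eapply Rle_trans; last apply (hb N); [apply vnorm_ge0|lia].
apply vnorm_le_sq => //.
have Hl := lim_sum d (fun j m => (u m j - w j) * (u m j - w j)) (fun j => (l j - w j) * (l j - w j))
  (fun j => is_lim_seq_mult' _ _ _ _ (is_lim_seq_minus' _ _ _ _ (hl j) (is_lim_seq_const _))
                                       (is_lim_seq_minus' _ _ _ _ (hl j) (is_lim_seq_const _))).
have := is_lim_seq_le_loc _ (fun _ => B * B) _ (B * B) _ Hl (is_lim_seq_const _).
apply. exists N => m hm. rewrite -[Sum _ _]/(dot (fun j => u m j - w j) (fun j => u m j - w j)).
rewrite -vnorm_sq. have := hb m hm. have := vnorm_ge0 (fun j => u m j - w j). nra.
Qed.

Lemma geo_le n m : (n <= m)%N -> (/8)^m <= (/8)^n.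
Proof. elim: m => [|m IH]. rewrite leqn0 => /eqP ->. lra.
rewrite leq_eqVlt ltnS => /orP [/eqP ->|h]. lra.
have := IH h. have : 0 < (/8)^m by apply pow_lt; lra. simpl. lra. Qed.

Lemma geo_small (K e : R) : 0 < K -> 0 < e -> exists N, forall n, (N <= n)%coq_nat -> K * (/8)^n < e.
Proof. move=> hK he.
have [N HN] := pow_lt_1_zero (/8) ltac:(rewrite Rabs_pos_eq; lra) (e / K) ltac:(apply Rdiv_lt_0_compat; lra).
exists N => n hn. have := HN n hn. rewrite Rabs_pos_eq; last by left; apply pow_lt; lra.
move=> h. apply (Rmult_lt_compat_l K) in h => //. have E : K * (e / K) = e by field; lra. lra.
Qed.

Lemma vnorm_diff_le {d} (u v : vec d) : vnorm (fun i => u i - v i) <= vnorm u + vnorm v.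
Proof. rewrite (vnorm_ext _ (fun i => u i + (-1) * v i)); last by move=> i; ring.
eapply Rle_trans; first apply vnorm_triang. rewrite vnorm_scal Rabs_Ropp Rabs_R1; lra. Qed.

Lemma vnorm_self {d} (u : vec d) : vnorm (fun i => u i - u i) = 0.
Proof. rewrite (vnorm_ext _ (fun _ => 0)). apply vnorm_zero. move=> i; ring. Qed.

Section Op.
Variables (d : nat) (g : 'I_d -> vec d -> R) (t Rr C C2R : R) (x0 x1 : vec d).
Hypothesis ht : 0 < t.
Hypothesis hRr : 0 < Rr.
Hypothesis hx0 : vnorm x0 <= Rr.
Hypothesis hx1 : vnorm x1 <= Rr.
Hypothesis hgc : forall j, continuous_Rd (g j).
Hypothesis hlip : forall x y, vnorm x <= 2*Rr -> vnorm y <= 2*Rr ->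
  vnorm (fun j => g j x - g j y) <= C * vnorm (fun i => x i - y i).
Hypothesis hC0 : 0 <= C.
Hypothesis hCt : C * (t*t) <= /4.
Hypothesis hG : forall x, vnorm x <= 2*Rr -> vnorm (fun j => g j x) <= C2R.
Hypothesis hC20 : 0 <= C2R.
Hypothesis hC2t : C2R * (t*t) <= Rr/2.

Definition clamp r := Rmin t (Rmax 0 r).

Lemma clamp_in r : 0 <= clamp r <= t.
Proof. rewrite /clamp /Rmin /Rmax. repeat case: Rle_dec; lra. Qed.

Lemma clamp_id s : 0 <= s <= t -> clamp s = s.
Proof. rewrite /clamp /Rmin /Rmax. repeat case: Rle_dec; lra. Qed.

Lemma clamp_lip r r' : Rabs (clamp r' - clamp r) <= Rabs (r' - r).
Proof. rewrite /clamp /Rmin /Rmax. repeat case: Rle_dec; split_Rabs; lra. Qed.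

Definition VC (Y : R -> vec d) := forall r eps, 0 < eps -> exists del, 0 < del /\
  forall r', Rabs (r' - r) < del -> vnorm (fun i => Y r' i - Y r i) < eps.

Definition Good (X : R -> vec d) := VC (fun r => X (clamp r)) /\
  forall s, 0 <= s <= t -> vnorm (X s) <= 2 * Rr.

Definition G (X : R -> vec d) j r := g j (X (clamp r)).

Lemma G_cpt X j r : Good X -> continuity_pt (G X j) r.
Proof. move=> [hv _]. apply cont_eps => eps he.
have [del1 [hd1 Hd1]] := hgc j (X (clamp r)) eps he.
have [del [hd Hd]] := hv r del1 hd1.
exists del; split=>// r' hr'. apply Hd1. by apply Hd. Qed.

Lemma k1_cpt r : continuity_pt (fun r => r) r.
Proof. apply (cont_of_der _ _ 1). apply is_derive_Reals. auto_derive; auto. Qed.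

Lemma k2_cpt r : continuity_pt (fun r => t - r) r.
Proof. apply (cont_of_der _ _ (-1)). apply is_derive_Reals. auto_derive; auto. Qed.

Lemma kG_cont (k : R -> R) X j : Good X -> (forall r, continuity_pt k r) ->
  forall r, continuous (fun r => k r * G X j r) r.
Proof. move=> hX hk r. apply cpt_cont.
exact (continuity_pt_mult k (G X j) r (hk r) (G_cpt X j r hX)). Qed.

Lemma kG_ex (k : R -> R) X j : Good X -> (forall r, continuity_pt k r) ->
  forall a b, ex_RInt (fun r => k r * G X j r) a b.
Proof. move=> hX hk a b. apply (ex_RInt_continuous (V:=R_CompleteNormedModule)) => z _. by apply kG_cont. Qed.

Definition A X j s := RInt (fun r => r * G X j r) 0 s.
Definition B X j s := RInt (fun r => (t - r) * G X j r) s t.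

Definition TX (X : R -> vec d) (s : R) : vec d := fun j =>
  (x0 j + s / t * (x1 j - x0 j)) + ((t - s) / t * A X j s + s / t * B X j s).

Definition vel (X : R -> vec d) (s : R) : vec d := fun j =>
  (x1 j - x0 j) / t + / t * (B X j s - A X j s).

Lemma TX_deriv X j s : Good X -> derivable_pt_lim (fun s => TX X s j) s (vel X s j).
Proof. move=> hX.
have hA := dA (fun r => r * G X j r) 0 s (kG_ex _ X j hX k1_cpt) (kG_cont _ X j hX k1_cpt).
have hB := dB (fun r => (t - r) * G X j r) t s (kG_ex _ X j hX k2_cpt) (kG_cont _ X j hX k2_cpt).
have h1 : derivable_pt_lim (fun s => x0 j + s / t * (x1 j - x0 j)) s ((x1 j - x0 j) / t).
  apply is_derive_Reals. auto_derive; auto. field; lra.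
have h2 : derivable_pt_lim (fun s => (t - s) / t) s (- / t).
  apply is_derive_Reals. auto_derive; auto. field; lra.
have h3 : derivable_pt_lim (fun s => s / t) s (/ t).
  apply is_derive_Reals. auto_derive; auto. field; lra.
have := dplus _ _ s _ _ h1 (dplus _ _ s _ _ (dmult _ _ s _ _ h2 hA) (dmult _ _ s _ _ h3 hB)).
move=> H. apply: dpl_eq. exact H.
rewrite /vel /A /B. field. lra.
Qed.

Lemma vel_deriv X j s : Good X -> derivable_pt_lim (fun s => vel X s j) s (- G X j s).
Proof. move=> hX.
have hA := dA (fun r => r * G X j r) 0 s (kG_ex _ X j hX k1_cpt) (kG_cont _ X j hX k1_cpt).
have hB := dB (fun r => (t - r) * G X j r) t s (kG_ex _ X j hX k2_cpt) (kG_cont _ X j hX k2_cpt).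
have := dplus _ _ s _ _ (dconst ((x1 j - x0 j) / t) s)
  (dmult _ _ s _ _ (dconst (/ t) s) (dminus _ _ s _ _ hB hA)).
move=> H. apply: dpl_eq. exact H. field. lra.
Qed.


Lemma vec_cont (Y : R -> vec d) : (forall j r, continuity_pt (fun s => Y s j) r) -> VC Y.
Proof. move=> H r eps he.
set e' := eps / (INR d + 1).
have hd := pos_INR d.
have he' : 0 < e' by apply Rdiv_lt_0_compat; lra.
have [del [hdel Hdel]] := finite_delta d
  (fun j a => forall r', Rabs (r' - r) < a -> Rabs (Y r' j - Y r j) < e')
  (fun j a b hab H r' hr => H r' ltac:(lra))
  (fun j => cont_eps_inv _ _ (H j r) e' he').
exists del; split=>// r' hr'.
eapply Rle_lt_trans; first apply vnorm_le_sumabs.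
apply (Rle_lt_trans _ (INR d * e')).
  rewrite -sum_const. apply sum_le => j. left. by apply Hdel.
rewrite /e'. apply (Rmult_lt_reg_r (INR d + 1)); first lra.
rewrite Rmult_assoc /Rdiv Rmult_assoc Rinv_l; nra.
Qed.

Lemma clamp_cpt r : continuity_pt clamp r.
Proof. apply cont_eps => eps he. exists eps; split=>// y hy.
eapply Rle_lt_trans; first apply clamp_lip. done. Qed.

Lemma vnorm3 (a b c : vec d) p q :
  vnorm (fun j => a j + (p * b j + q * c j)) <= vnorm a + Rabs p * vnorm b + Rabs q * vnorm c.
Proof. eapply Rle_trans; first apply vnorm_triang.
rewrite Rplus_assoc. apply Rplus_le_compat_l.
eapply Rle_trans; first apply vnorm_triang. rewrite !vnorm_scal; lra. Qed.

Lemma bound_alg s K : 0 <= s <= t -> 0 <= K ->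
  (t - s) / t * (t * K * (s - 0)) + s / t * (t * K * (t - s)) <= K * (t * t) / 2.
Proof. move=> hs hK.
have -> : (t - s) / t * (t * K * (s - 0)) + s / t * (t * K * (t - s)) = 2 * K * (s * (t - s)).
  field; lra.
have H4 : s * (t - s) <= t * t / 4 by have := Rle_0_sqr (t - 2*s); rewrite /Rsqr; nra. have := Rmult_le_compat_l K _ _ hK H4. lra. Qed.

Lemma TX_ball X : Good X -> forall s, 0 <= s <= t -> vnorm (TX X s) <= 2 * Rr.
Proof. move=> hX s hs.
have hG' : forall r, 0 <= r <= t -> vnorm (fun j => G X j r) <= C2R.
  move=> r hr. apply hG. apply hX.2. apply clamp_in.
have IA := VIB 0 s t C2R (fun r => r) (fun r j => G X j r) ltac:(lra)
  (fun j => kG_ex _ X j hX k1_cpt 0 s) ltac:(move=> r hr; lra)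
  ltac:(move=> r hr; apply hG'; lra) hC20.
have IB := VIB s t t C2R (fun r => t - r) (fun r j => G X j r) ltac:(lra)
  (fun j => kG_ex _ X j hX k2_cpt s t) ltac:(move=> r hr; lra)
  ltac:(move=> r hr; apply hG'; lra) hC20.
have hlin : vnorm (fun j => x0 j + s / t * (x1 j - x0 j)) <= Rr.
  apply ball_convex => //. split. apply Rdiv_le_0_compat; lra.
  apply (Rmult_le_reg_r t) => //. rewrite /Rdiv Rmult_assoc Rinv_l; lra.
eapply Rle_trans; first apply (vnorm3 (fun j => x0 j + s / t * (x1 j - x0 j))
   (fun j => A X j s) (fun j => B X j s)).
rewrite !Rabs_pos_eq; try (apply Rdiv_le_0_compat; lra).
have h1 := bound_alg s C2R hs hC20.
have h2 : (t - s) / t * vnorm (fun j => A X j s) <= (t - s) / t * (t * C2R * (s - 0)).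
  apply Rmult_le_compat_l => //. apply Rdiv_le_0_compat; lra.
have h3 : s / t * vnorm (fun j => B X j s) <= s / t * (t * C2R * (t - s)).
  apply Rmult_le_compat_l => //. apply Rdiv_le_0_compat; lra.
lra.
Qed.

Lemma TX_good X : Good X -> Good (TX X).
Proof. move=> hX. split; last by apply TX_ball.
apply vec_cont => j r.
apply (continuity_pt_comp clamp (fun s => TX X s j) r (clamp_cpt r)).
apply (cont_of_der _ _ _ (TX_deriv X j (clamp r) hX)).
Qed.

Lemma TX_contr X Y D : Good X -> Good Y ->
  (forall r, 0 <= r <= t -> vnorm (fun i => X r i - Y r i) <= D) ->
  forall s, 0 <= s <= t -> vnorm (fun j => TX X s j - TX Y s j) <= D / 8.
Proof. move=> hX hY hD s hs.
have D0 : 0 <= D. eapply Rle_trans; last apply (hD 0); [apply vnorm_ge0|lra].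
set W := fun r j => G X j r - G Y j r.
have hW : forall r, 0 <= r <= t -> vnorm (W r) <= C * D.
  move=> r hr. rewrite /W /G. eapply Rle_trans. apply hlip; [apply hX.2|apply hY.2]; apply clamp_in.
  apply Rmult_le_compat_l => //. apply hD. apply clamp_in.
have Wc : forall (k : R -> R), (forall r, continuity_pt k r) -> forall j a b, ex_RInt (fun r => k r * W r j) a b.
  move=> k hk j a b. apply (ex_RInt_continuous (V:=R_CompleteNormedModule)) => z _.
  apply cpt_cont. apply (continuity_pt_mult k (fun r => W r j) z (hk z)).
  apply (continuity_pt_minus (G X j) (G Y j) z); by apply G_cpt.
have CD0 : 0 <= C * D by nra.
have IA := VIB 0 s t (C * D) (fun r => r) W ltac:(lra)
  (fun j => Wc _ k1_cpt j 0 s) ltac:(move=> r hr; lra) ltac:(move=> r hr; apply hW; lra) CD0.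
have IB := VIB s t t (C * D) (fun r => t - r) W ltac:(lra)
  (fun j => Wc _ k2_cpt j s t) ltac:(move=> r hr; lra) ltac:(move=> r hr; apply hW; lra) CD0.
have EA : forall j, A X j s - A Y j s = RInt (fun r => r * W r j) 0 s.
  move=> j. rewrite /A RInt_sub; try (apply kG_ex => //; apply k1_cpt).
  f_equal. apply functional_extensionality => r. rewrite /W; ring.
have EB : forall j, B X j s - B Y j s = RInt (fun r => (t - r) * W r j) s t.
  move=> j. rewrite /B RInt_sub; try (apply kG_ex => //; apply k2_cpt).
  f_equal. apply functional_extensionality => r. rewrite /W; ring.
rewrite (vnorm_ext _ (fun j => 0 + ((t - s) / t * RInt (fun r => r * W r j) 0 s +
    s / t * RInt (fun r => (t - r) * W r j) s t))); last first.
  move=> j. rewrite -EA -EB /TX. ring.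
eapply Rle_trans; first apply (vnorm3 (fun _ => 0)).
rewrite vnorm_zero !Rabs_pos_eq; try (apply Rdiv_le_0_compat; lra).
have h1 := bound_alg s (C * D) hs CD0.
have h2 : (t - s) / t * vnorm (fun j => RInt (fun r => r * W r j) 0 s) <= (t - s) / t * (t * (C * D) * (s - 0)).
  apply Rmult_le_compat_l => //. apply Rdiv_le_0_compat; lra.
have h3 : s / t * vnorm (fun j => RInt (fun r => (t - r) * W r j) s t) <= s / t * (t * (C * D) * (t - s)).
  apply Rmult_le_compat_l => //. apply Rdiv_le_0_compat; lra.
have h4 : C * D * (t * t) / 2 <= D / 8.
  have -> : C * D * (t * t) / 2 = (C * (t*t)) * D / 2 by field.
  have : C * (t * t) * D <= / 4 * D by apply Rmult_le_compat_r. lra.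
lra.
Qed.


Fixpoint It (n : nat) : R -> vec d :=
  match n with
  | O => fun s j => x0 j + s / t * (x1 j - x0 j)
  | S n => TX (It n)
  end.

Lemma It_good n : Good (It n).
Proof. elim: n => [|n IH]; last by apply TX_good.
split.
- apply vec_cont => j r.
  apply (continuity_pt_comp clamp (fun s => x0 j + s / t * (x1 j - x0 j)) r (clamp_cpt r)).
  apply (cont_of_der _ _ ((x1 j - x0 j) / t)). apply is_derive_Reals. auto_derive; auto. field; lra.
- move=> s hs. simpl. apply (Rle_trans _ Rr); last lra. apply ball_convex => //. split.
  apply Rdiv_le_0_compat; lra.
  apply (Rmult_le_reg_r t) => //. rewrite /Rdiv Rmult_assoc Rinv_l; lra.
Qed.

Definition K := 4 * Rr.

Lemma It_step n s : 0 <= s <= t -> vnorm (fun j => It n.+1 s j - It n s j) <= K * (/8)^n.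
Proof. elim: n s => [|n IH] s hs.
- eapply Rle_trans; first apply vnorm_diff_le. rewrite /K /=.
  have := (It_good 1).2 s hs. have := (It_good 0).2 s hs. simpl. lra.
- have := TX_contr (It n.+1) (It n) (K * (/8)^n) (It_good _) (It_good _) IH s hs.
  simpl. move=> h. apply (Rle_trans _ _ _ h). lra.
Qed.

Lemma It_cauchy n m s : 0 <= s <= t -> (n <= m)%N ->
  vnorm (fun j => It m s j - It n s j) <= 8 / 7 * K * ((/8)^n - (/8)^m).
Proof. move=> hs. elim: m => [|m IH].
- rewrite leqn0 => /eqP ->. rewrite vnorm_self. lra.
- rewrite leq_eqVlt ltnS => /orP [/eqP ->|h]. rewrite vnorm_self. lra.
  eapply Rle_trans; first apply (vnorm_triang3 _ (It m s)).
  have := It_step m s hs. have := IH h. simpl. lra.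
Qed.

Lemma It_cauchy' n m s : 0 <= s <= t -> (n <= m)%N ->
  vnorm (fun j => It m s j - It n s j) <= 8 / 7 * K * (/8)^n.
Proof. move=> hs h. have := It_cauchy n m s hs h. have : 0 < (/8)^m by apply pow_lt; lra.
have : 0 < K by rewrite /K; lra. nra. Qed.

Lemma K'pos : 0 < 8 / 7 * K.
Proof. rewrite /K; lra. Qed.

Definition Xinf (s : R) : vec d := fun j => real (Lim_seq (fun n => It n s j)).

Lemma Xinf_lim s j : 0 <= s <= t -> is_lim_seq (fun n => It n s j) (Xinf s j).
Proof. move=> hs. apply Lim_seq_correct'. apply ex_lim_seq_cauchy_corr.
move=> eps. have [N HN] := geo_small (8/7*K) eps K'pos (cond_pos eps).
exists N => n m hn hm.
case: (leqP n m) => h.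
- rewrite -Rabs_Ropp. have -> : - (It n s j - It m s j) = It m s j - It n s j by ring.
  eapply Rle_lt_trans; first apply (comp_le (fun j => It m s j - It n s j) j).
  eapply Rle_lt_trans; first apply (It_cauchy' n m s hs h). by apply HN.
- eapply Rle_lt_trans; first apply (comp_le (fun j => It n s j - It m s j) j).
  eapply Rle_lt_trans; first apply (It_cauchy' m n s hs (ltnW h)). by apply HN.
Qed.

Lemma Xinf_bound n s : 0 <= s <= t -> vnorm (fun j => Xinf s j - It n s j) <= 8 / 7 * K * (/8)^n.
Proof. move=> hs. apply (LIMV (fun m => It m s) _ _ n).
- move=> j; by apply Xinf_lim.
- move=> m hm. apply It_cauchy' => //. by apply/leP.
Qed.

Lemma Xinf_ball s : 0 <= s <= t -> vnorm (Xinf s) <= 2 * Rr.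
Proof. move=> hs. rewrite (vnorm_ext (Xinf s) (fun j => Xinf s j - 0)); last by move=> j; ring.
apply (LIMV (fun m => It m s) _ _ 0).
- move=> j; by apply Xinf_lim.
- move=> m _. rewrite (vnorm_ext _ (It m s)); last by move=> j; ring.
  by apply (It_good m).2.
Qed.

Lemma Xinf_good : Good Xinf.
Proof. split; last by apply Xinf_ball.
move=> r eps he.
have [N HN] := geo_small (8/7*K) (eps/3) K'pos ltac:(lra).
have hN := HN N (le_n N).
have [del [hdel Hdel]] := (It_good N).1 r (eps/3) ltac:(lra).
exists del; split=>// r' hr'.
eapply Rle_lt_trans; first apply (vnorm_triang3 _ (It N (clamp r'))).
have h1 := Xinf_bound N (clamp r') (clamp_in r').
have h2 := Xinf_bound N (clamp r) (clamp_in r).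
rewrite vnorm_sub_sym in h2.
have := vnorm_triang3 (It N (clamp r')) (It N (clamp r)) (Xinf (clamp r)).
have := Hdel r' hr'. lra.
Qed.

Lemma Xinf_fixed s : 0 <= s <= t -> forall j, TX Xinf s j = Xinf s j.
Proof. move=> hs j.
have H0 : vnorm (fun j => TX Xinf s j - Xinf s j) = 0.
  have hv := vnorm_ge0 (fun j => TX Xinf s j - Xinf s j).
  case: hv => // hv. exfalso.
  set v := vnorm (fun j => TX Xinf s j - Xinf s j) in hv.
  have [N HN] := geo_small (8/7*K) v K'pos hv.
  have hN := HN N (le_n N).
  have h1 := TX_contr Xinf (It N) (8/7*K*(/8)^N) Xinf_good (It_good N) (fun r hr => Xinf_bound N r hr) s hs.
  have h2 := Xinf_bound N.+1 s hs. rewrite vnorm_sub_sym in h2. simpl in h2.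
  have h3 := vnorm_triang3 (TX Xinf s) (TX (It N) s) (Xinf s).
  have : 0 < (/8)^N by apply pow_lt; lra.
  have := K'pos. rewrite /v in hN. nra.
have := vnorm0_comp _ j H0. lra.
Qed.

Lemma main_op : exists v0 : vec d, vnorm v0 <= 4 * Rr /\
    exists xs vs : R -> vec d,
      solves_on g t xs vs x0 (fun i => v0 i / t) /\ forall i, xs t i = x1 i.
Proof.
have hA0 : forall j, A Xinf j 0 = 0.
  move=> j. rewrite /A RInt_point. done.
have hBt : forall j, B Xinf j t = 0.
  move=> j. rewrite /B RInt_point. done.
exists (fun i => t * vel Xinf 0 i). split.
- rewrite (vnorm_ext _ (fun j => (x1 j - x0 j) + (1 * RInt (fun r => (t - r) * G Xinf j r) 0 t + 0 * 0))); last first.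
    move=> j. rewrite /vel hA0 /B. field. lra.
  eapply Rle_trans; first apply vnorm3.
  have hv := vnorm_diff_le x1 x0.
  have IB := VIB 0 t t C2R (fun r => t - r) (fun r j => G Xinf j r) ltac:(lra)
    (fun j => kG_ex _ Xinf j Xinf_good k2_cpt 0 t) ltac:(move=> r hr; lra)
    ltac:(move=> r hr; apply hG; apply Xinf_ball; apply clamp_in) hC20.
  rewrite Rabs_R1 Rabs_R0. have := vnorm_ge0 (fun _ : 'I_d => 0). lra.
- exists (TX Xinf), (vel Xinf). split; [split; [|split]|].
  + move=> i. rewrite /TX hA0. field; lra.
  + move=> i. field; lra.
  + move=> s hs i. split. by apply TX_deriv, Xinf_good.
    have := vel_deriv Xinf i s Xinf_good. rewrite /G clamp_id //.
    have -> : Xinf s = TX Xinf s. apply functional_extensionality => j. by rewrite Xinf_fixed.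
    done.
  + move=> i. rewrite /TX hBt. field; lra.
Qed.

End Op.


Theorem mainTheorem8 (d : nat) (Phi : vec d -> R) (g : 'I_d -> vec d -> R)
  (H : 'I_d -> 'I_d -> vec d -> R)
  (hPhi : C2_with Phi g H)
  (x0 x1 : vec d)
  (hR : 0 < Rmax (vnorm x0) (vnorm x1))
  (C C2R C9R : R)
  (hC : is_lub (fun c => exists x : vec d,
           vnorm x <= 9 * Rmax (vnorm x0) (vnorm x1) /\ is_opnorm (fun j k => H j k x) c) C)
  (hC2R : is_lub (fun c => exists x : vec d,
           vnorm x <= 2 * Rmax (vnorm x0) (vnorm x1) /\ c = vnorm (fun j => g j x)) C2R)
  (hC9R : is_lub (fun c => exists x : vec d,
           vnorm x <= 9 * Rmax (vnorm x0) (vnorm x1) /\ c = vnorm (fun j => g j x)) C9R)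
  (t1 : R) (ht1 : 0 < t1)
  (h1 : C * t1 ^ 2 * exp (C * t1 ^ 2) <= / 4)
  (h2 : C2R <> 0 -> t1 <= sqrt (Rmax (vnorm x0) (vnorm x1)) / sqrt (2 * C2R))
  (h3 : C9R <> 0 -> t1 <= 2 * sqrt (Rmax (vnorm x0) (vnorm x1)) / sqrt C9R) :
  forall t, 0 < t <= t1 ->
  exists v0 : vec d, vnorm v0 <= 4 * Rmax (vnorm x0) (vnorm x1) /\
    exists xs vs : R -> vec d,
      solves_on g t xs vs x0 (fun i => v0 i / t) /\ forall i, xs t i = x1 i.
Proof.
move=> t [ht htt1].
set Rr := Rmax (vnorm x0) (vnorm x1) in hR hC hC2R h2 *.
have hx0 : vnorm x0 <= Rr by apply Rmax_l.
have hx1 : vnorm x1 <= Rr by apply Rmax_r.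
case: hPhi => [_ [_ [hgc [hHp hHc]]]].
have hCb : forall x, vnorm x <= 2 * Rr -> forall c, is_opnorm (fun j k => H j k x) c -> c <= C.
  move=> x hx c hc. apply hC.1. exists x. split=>//. lra.
have hlip := lipschitz d g H hHp hHc (2 * Rr) C hCb.
have z0 : vnorm (fun _ : 'I_d => 0) <= 2 * Rr by rewrite vnorm_zero; lra.
have hC0 : 0 <= C.
  have [c hc] := opnorm_exists (fun j k => H j k (fun _ => 0)).
  have := opnorm_ge0 _ _ hc. have := hCb _ z0 c hc. lra.
have hCt : C * (t * t) <= / 4.
  have he : 1 <= exp (C * t1 ^ 2).
    have := exp_ineq1_le (C * t1 ^ 2). have : 0 <= C * t1 ^ 2 by simpl; nra. lra.
  have : C * (t * t) <= C * t1 ^ 2. simpl. apply Rmult_le_compat_l => //. nra.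
  have : 0 <= C * t1 ^ 2 by simpl; nra.
  nra.
have hG : forall x, vnorm x <= 2 * Rr -> vnorm (fun j => g j x) <= C2R.
  move=> x hx. apply hC2R.1. by exists x.
have hC20 : 0 <= C2R.
  have := hG _ z0. have := vnorm_ge0 (fun j => g j (fun _ : 'I_d => 0)). lra.
have hC2t : C2R * (t * t) <= Rr / 2.
  case: (Req_dec C2R 0) => hz. rewrite hz. lra.
  have hp : 0 < C2R by lra.
  have ht2 := h2 hz.
  have hq : 0 < sqrt (2 * C2R) by apply sqrt_lt_R0; lra.
  have hs : t * sqrt (2 * C2R) <= sqrt Rr.
    have : t <= sqrt Rr / sqrt (2 * C2R) by lra.
    move=> h. apply (Rmult_le_compat_r (sqrt (2 * C2R))) in h; last lra.
    move: h. rewrite /Rdiv Rmult_assoc Rinv_l; lra.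
  have hs0 : 0 <= t * sqrt (2 * C2R) by nra.
  have := Rmult_le_compat _ _ _ _ hs0 hs0 hs hs.
  rewrite sqrt_sqrt; last lra.
  have -> : t * sqrt (2 * C2R) * (t * sqrt (2 * C2R)) = t * t * (sqrt (2 * C2R) * sqrt (2 * C2R)) by ring.
  rewrite sqrt_sqrt; last lra. lra.
exact (main_op d g t Rr C C2R x0 x1 ht hR hx0 hx1 hgc hlip hC0 hCt hG hC20 hC2t).
Qed.
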